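(* Fix integers $n,L\ge1$ and $s>0$. Consider the $L$-layer linear Transformer acting on $Z_l\in\mathbb{R}^{n\times n}$ by $$Z_{l+1}=Z_l+W^V_l Z_l Z_l^\top (W^Q_l)^\top W^K_l Z_l+W^R_l Z_l,$$ with weights $W^V_l,W^Q_l,W^K_l,W^R_l\in\mathbb{R}^{n\times n}$, and for a graph Laplacian $\mathcal{L}$ let the input be $Z_0^\top=I_{n\times n}-3^{-L}s\mathcal{L}$. Then there exists a choice of the weights such that for every graph on $n$ vertices whose Laplacian $\mathcal{L}$ has largest eigenvalue $\lambda_{\max}$ satisfying $s\lambda_{\max}\le 3^L$, $$\left\|Z_L-\exp(-s\mathcal{L})\right\|_2\le 3^{-L+1}s^2\lambda_{\max}^2 .$$
   Context: A graph has $n$ vertices, $d$ edges and positive edge resistances $r_j$; graphs are connected. With an arbitrary edge orientation, the incidence matrix $B\in\mathbb{R}^{n\times d}$ has $B_{ij}=\mp1/\sqrt{r_j}$ if $e_j$ leaves/enters vertex $i$ and $0$ otherwise, and the Laplacian is $\mathcal{L}=BB^\top$. $\exp(-s\mathcal{L})$ is the matrix exponential and $\|\cdot\|_2$ the spectral norm. *)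

(* Defs.v *)
From HB Require Import structures.
From mathcomp Require Import all_boot all_order all_algebra.
From mathcomp Require Import all_classical all_reals all_analysis.
Set Implicit Arguments. Unset Strict Implicit. Unset Printing Implicit Defensive.
Import Order.TTheory GRing.Theory Num.Theory.
Import numFieldNormedType.Exports.
Local Open Scope ring_scope.
Local Open Scope classical_set_scope.

Section Defs.
Variable R : realType.

(* k-th power of a square matrix (defined for every size n, including n = 0) *)
Definition mxpow (n : nat) (A : 'M[R]_n) (k : nat) : 'M[R]_n :=
  iter k (fun M => A *m M) 1%:M.

Definition expm (n : nat) (A : 'M[R]_n) : 'M[R]_n :=
  \matrix_(i, j) limn (fun N : nat => (\sum_(k < N) (k`!%:R)^-1 * mxpow A k i j : R)).

Definition vnorm (n : nat) (v : 'cV[R]_n) : R := Num.sqrt (\sum_i (v i 0) ^+ 2).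

Definition specnorm (n : nat) (A : 'M[R]_n) : R :=
  sup [set vnorm (A *m v) / vnorm v | v in [set v : 'cV[R]_n | v != 0]].

(* A graph on n vertices with d edges, edge j oriented from src j to dst j,
   with resistance r j. Incidence matrix: B i j = -1/sqrt r_j if e_j leaves i,
   +1/sqrt r_j if e_j enters i, 0 otherwise. *)
Definition incidence (n d : nat) (src dst : 'I_d -> 'I_n) (r : 'I_d -> R)
  : 'M[R]_(n, d) :=
  \matrix_(i, j) (if src j == i then - (Num.sqrt (r j))^-1
                  else if dst j == i then (Num.sqrt (r j))^-1 else 0).

Definition laplacian (n d : nat) (src dst : 'I_d -> 'I_n) (r : 'I_d -> R)
  : 'M[R]_n :=
  incidence src dst r *m (incidence src dst r)^T.

Definition adjacent (n d : nat) (src dst : 'I_d -> 'I_n) : rel 'I_n :=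
  fun u v => [exists j, ((src j == u) && (dst j == v)) ||
                        ((src j == v) && (dst j == u))].

Definition connected_graph (n d : nat) (src dst : 'I_d -> 'I_n) : Prop :=
  forall u v : 'I_n, connect (adjacent src dst) u v.

Definition is_graph (n d : nat) (src dst : 'I_d -> 'I_n) (r : 'I_d -> R) : Prop :=
  [/\ forall j, src j != dst j, forall j, 0 < r j & connected_graph src dst].

Definition is_lambda_max (n : nat) (A : 'M[R]_n) (lam : R) : Prop :=
  eigenvalue A lam /\ forall mu, eigenvalue A mu -> mu <= lam.

Definition tf_layer (n : nat) (WV WQ WK WR Z : 'M[R]_n) : 'M[R]_n :=
  Z + WV *m Z *m Z^T *m WQ^T *m WK *m Z + WR *m Z.

Fixpoint tf_run (n : nat) (WV WQ WK WR : nat -> 'M[R]_n) (Z0 : 'M[R]_n) (l : nat)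
  : 'M[R]_n :=
  match l with
  | 0 => Z0
  | l'.+1 => tf_layer (WV l') (WQ l') (WK l') (WR l') (tf_run WV WQ WK WR Z0 l')
  end.

End Defs.

(* Main.v *)
Require Import Defs.
From HB Require Import structures.
From mathcomp Require Import all_boot all_order all_algebra.
From mathcomp Require Import all_classical all_reals all_analysis.
From mathcomp Require Import complex spectral sesquilinear.
From mathcomp Require Import ring lra.
Import Order.TTheory GRing.Theory Num.Theory.
Import numFieldNormedType.Exports.
Local Open Scope ring_scope.
Set Implicit Arguments. Unset Strict Implicit. Unset Printing Implicit Defensive.
Section Part1.
Variable R : realType.

Lemma trmxX (n : nat) (A : 'M[R]_n.+1) k : (A ^+ k)^T = A^T ^+ k.
Proof.
elim: k => [|k IH]; first by rewrite !expr0 trmx1.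
by rewrite exprS trmx_mul IH exprSr.
Qed.

Lemma mxpowE (n : nat) (A : 'M[R]_n.+1) k : mxpow A k = A ^+ k.
Proof.
elim: k => [|k IH] //=; by rewrite /mxpow /= -/(mxpow A k) IH exprS.
Qed.

Lemma tf_pow (n : nat) (A : 'M[R]_n.+1) : A^T = A -> forall l,
  tf_run (fun _ => 1%:M) (fun _ => 1%:M) (fun _ => 1%:M) (fun _ => - 1%:M) A l
  = A ^+ (3 ^ l).
Proof.
move=> AT; elim => [|l IH] /=; first by rewrite expr1.
rewrite IH /tf_layer trmxX AT trmx1 !mul1mx mulmx1 mulNmx mul1mx.
rewrite addrC addrA addNr add0r.
rewrite expnS mulnC exprM.
by rewrite mulmx1 !exprS expr0 mulr1 mulrA.
Qed.
End Part1.
Section Aux.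
Local Open Scope sesquilinear_scope.
Section Dg.
Variable C : numClosedFieldType.
Variable n : nat.
Variable P : 'M[C]_n.
Hypothesis PU : P \is unitarymx.

Definition Dg (f : 'I_n -> C) : 'M[C]_n := P^t* *m diag_mx (\row_i f i) *m P.

Lemma PPt : P *m P^t* = 1%:M.
Proof. exact/unitarymxP. Qed.

Lemma PtP : P^t* *m P = 1%:M.
Proof.
by rewrite -invmx_unitary // mulVmx // unitarymx_unit.
Qed.

Lemma Dg_mul f g : Dg f *m Dg g = Dg (fun i => f i * g i).
Proof.
rewrite /Dg !mulmxA -[_ *m P *m P^t*]mulmxA PPt mulmx1.
rewrite -[_ *m diag_mx _ *m diag_mx _]mulmxA mulmx_diag; congr (_ *m _ *m _).
by apply/matrixP => i j; rewrite !mxE.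
Qed.

Lemma Dg_add f g : Dg f + Dg g = Dg (fun i => f i + g i).
Proof.
rewrite /Dg -mulmxDl -mulmxDr; congr (_ *m _ *m _).
by apply/matrixP => i j; rewrite !mxE mulrnDl.
Qed.

Lemma Dg_scale a f : a *: Dg f = Dg (fun i => a * f i).
Proof.
rewrite /Dg scalemxAl scalemxAr; congr (_ *m _ *m _).
by apply/matrixP => i j; rewrite !mxE mulrnAr.
Qed.

Lemma Dg_1 : Dg (fun _ => 1) = 1%:M.
Proof.
rewrite /Dg.
have -> : diag_mx (\row_i (1:C)) = 1%:M :> 'M[C]_n.
  by apply/matrixP => i j; rewrite !mxE.
by rewrite mulmx1 PtP.
Qed.

Lemma Dg_entry f i j : Dg f i j = \sum_m ((P^t*) i m * P m j) * f m.
Proof.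
rewrite /Dg mxE; apply: eq_bigr => m _.
rewrite mul_mx_diag !mxE; ring.
Qed.

End Dg.

Lemma Dg_exp (C : numClosedFieldType) n (P : 'M[C]_n.+1) (PU : P \is unitarymx) f k :
  Dg P f ^+ k = Dg P (fun i => f i ^+ k).
Proof.
elim: k => [|k IH].
  by rewrite expr0 -[LHS](Dg_1 PU); congr Dg; apply: funext => i; rewrite expr0.
by rewrite exprS IH [_ * _](Dg_mul PU); congr Dg; apply: funext => i; rewrite exprS.
Qed.
Section Spec.
Variable R : realType.
Local Notation phi := (real_complex R).

Lemma phi_real (x : R) : phi x \is Num.real.
Proof. by apply/complex_realP; exists x. Qed.

Lemma spectral_real n (M : 'M[R]_n.+1) : M^T = M ->
  exists P : 'M[R[i]]_n.+1, exists d : 'I_n.+1 -> R,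
   [/\ P \is unitarymx, map_mx phi M = Dg P (fun i => phi (d i))
     & forall i, eigenvalue M (d i)].
Proof.
move=> MT.
set Mc := map_mx phi M.
have Msym : Mc \is symmetricmx.
  apply/is_hermitianmxP; rewrite expr0 scale1r map_mx_id //.
  by rewrite /Mc map_trmx MT.
have Mreal : Mc \is a realmx.
  by apply/mxOverP => i j; rewrite mxE phi_real.
have Mherm := realsym_hermsym Msym Mreal.
have /orthomx_spectralP Mdec := hermitian_normalmx Mherm.
have dreal := hermitian_spectral_diag_real Mherm.
set P := spectralmx Mc in Mdec.
set sp := spectral_diag Mc in Mdec dreal.
have PU : P \is unitarymx by exact: spectral_unitarymx.
exists P, (fun i => complex.Re (sp 0 i)).
have spE i : phi (complex.Re (sp 0 i)) = sp 0 i.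
  by apply: RRe_real; apply: (mxOverP dreal).
have McE : Mc = Dg P (fun i => phi (complex.Re (sp 0 i))).
  rewrite Mdec invmx_unitary // /Dg; congr (_ *m _ *m _).
  by apply/matrixP => i j; rewrite !mxE spE.
split => // i.
have : eigenvalue Mc (sp 0 i).
  apply/eigenvalueP; exists (delta_mx 0 i *m P).
    rewrite McE /Dg !mulmxA -[delta_mx 0 i *m P *m P^t*]mulmxA (PPt PU) mulmx1.
    rewrite scalemxAl; congr (_ *m _); apply/rowP => j.
    rewrite mul_mx_diag !mxE spE.
    by case: (eqVneq j i) => [->|_]; rewrite /= ?mulr1 ?mul1r ?mulr0 ?mul0r.
  rewrite mulmx_free_eq0 ?row_free_unit ?(unitarymx_unit PU) //.
  by apply/eqP => /matrixP /(_ 0 i); rewrite !mxE !eqxx /= => /eqP; rewrite oner_eq0.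
rewrite eigenvalue_root_char -spE /Mc -map_char_poly fmorph_root.
by rewrite -eigenvalue_root_char.
Qed.
End Spec.
Section Expm.
Local Open Scope classical_set_scope.
Variable R : realType.
Local Notation phi := (real_complex R).

Lemma Re_add (x y : R[i]) : complex.Re (x + y) = complex.Re x + complex.Re y.
Proof. by case: x => ? ?; case: y. Qed.
Lemma Im_add (x y : R[i]) : complex.Im (x + y) = complex.Im x + complex.Im y.
Proof. by case: x => ? ?; case: y. Qed.
Lemma Re_sum I (r : seq I) (F : I -> R[i]) :
  complex.Re (\sum_(i <- r) F i) = \sum_(i <- r) complex.Re (F i).
Proof. by apply: (big_morph _ Re_add). Qed.
Lemma Im_sum I (r : seq I) (F : I -> R[i]) :
  complex.Im (\sum_(i <- r) F i) = \sum_(i <- r) complex.Im (F i).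
Proof. by apply: (big_morph _ Im_add). Qed.
Lemma Re_mulR (a : R[i]) x : complex.Re (a * phi x) = complex.Re a * x.
Proof. by case: a => ar ai /=; rewrite mulr0 subr0. Qed.
Lemma Im_mulR (a : R[i]) x : complex.Im (a * phi x) = complex.Im a * x.
Proof. by case: a => ar ai /=; rewrite mulr0 add0r. Qed.
Lemma Re_phi x : complex.Re (phi x) = x. Proof. by []. Qed.
Lemma Im_phi x : complex.Im (phi x) = 0. Proof. by []. Qed.
Lemma complex_ext (z w : R[i]) :
  complex.Re z = complex.Re w -> complex.Im z = complex.Im w -> z = w.
Proof. by case: z => ? ?; case: w => ? ? /= -> ->. Qed.

Lemma cvg_sum_ord (m : nat) (u : 'I_m -> nat -> R) (l : 'I_m -> R) :
  (forall i, u i n @[n --> \oo] --> l i) ->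
  (\sum_i u i n) @[n --> \oo] --> \sum_i l i.
Proof.
move=> H; rewrite unlock /reducebig.
elim: (index_enum _) => [|i r IH] /=; first exact: cvg_cst.
exact: cvgD.
Qed.

Lemma mapE m n (A : 'M[R]_(m, n)) i j : phi (A i j) = map_mx phi A i j.
Proof. by rewrite mxE. Qed.

Lemma map_mxX n (M : 'M[R]_n.+1) k : map_mx phi (M ^+ k) = (map_mx phi M) ^+ k.
Proof.
elim: k => [|k IH]; first by rewrite !expr0 map_mx1.
by rewrite !exprS -IH; apply: map_mxM.
Qed.

Lemma expm_spec n (M : 'M[R]_n.+1) (P : 'M[R[i]]_n.+1) (d : 'I_n.+1 -> R) :
  P \is unitarymx -> map_mx phi M = Dg P (fun i => phi (d i)) ->
  map_mx phi (expm M) = Dg P (fun i => phi (expR (d i))).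
Proof.
move=> PU ME; apply/matrixP => i j.
rewrite Dg_entry !mxE.
set a := fun m => (P^t*) i m * P m j.
set T := fun m N => series (exp_coeff (d m)) N.
set S := fun N : nat => \sum_(k < N) (k`!%:R)^-1 * mxpow M k i j.
have SE N : phi (S N) = \sum_m a m * phi (T m N).
  rewrite /S rmorph_sum /=.
  under eq_bigr => k _ do
    rewrite rmorphM /= mxpowE mapE map_mxX ME Dg_exp // Dg_entry big_distrr.
  rewrite exchange_big /=; apply: eq_bigr => m _.
  rewrite /T /series /= big_mkord rmorph_sum big_distrr /=; apply: eq_bigr => k _.
  rewrite /exp_coeff rmorphM rmorphXn !fmorphV /a; ring.
have SR N : S N = \sum_m complex.Re (a m) * T m N.
  rewrite -[S N]Re_phi SE Re_sum; under eq_bigr do rewrite Re_mulR; reflexivity.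
have SI N : 0 = \sum_m complex.Im (a m) * T m N.
  rewrite -[LHS](Im_phi (S N)) SE Im_sum; under eq_bigr do rewrite Im_mulR; reflexivity.
have Tc m : T m N @[N --> \oo] --> expR (d m).
  exact: is_cvg_series_exp_coeff.
have cR : S N @[N --> \oo] --> \sum_m complex.Re (a m) * expR (d m).
  rewrite (_ : S = fun N => \sum_m complex.Re (a m) * T m N); last exact: funext.
  apply: cvg_sum_ord => m; apply: cvgM; [exact: cvg_cst | exact: Tc].
have cI : (fun N : nat => 0 : R) @ \oo --> \sum_m complex.Im (a m) * expR (d m).
  rewrite (_ : (fun _ => _) = fun N => \sum_m complex.Im (a m) * T m N); last exact: funext.
  apply: cvg_sum_ord => m; apply: cvgM; [exact: cvg_cst | exact: Tc].
have I0 : \sum_m complex.Im (a m) * expR (d m) = 0.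
  by rewrite -(cvg_lim _ cI) // lim_cst.
have HR m : complex.Re ((P^t*) i m * P m j * phi (expR (d m))) = complex.Re (a m) * expR (d m).
  exact: Re_mulR.
have HI m : complex.Im ((P^t*) i m * P m j * phi (expR (d m))) = complex.Im (a m) * expR (d m).
  exact: Im_mulR.
rewrite -/(S) (cvg_lim _ cR) //.
apply: complex_ext.
  rewrite Re_sum /=; symmetry; etransitivity; [apply: eq_bigr => m _; exact: HR|reflexivity].
rewrite Im_sum /=; transitivity (\sum_m complex.Im (a m) * expR (d m)); first by rewrite I0.
symmetry; etransitivity; [apply: eq_bigr => m _; exact: HI|reflexivity].
Qed.
End Expm.
Section Norm.
Variable R : realType.
Local Notation phi := (real_complex R).
Local Notation C := (R[i]).

Definition qf n (w : 'cV[C]_n) : C := (w^t* *m w) 0 0.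

Lemma trCmul m n p (A : 'M[C]_(m, n)) (B : 'M[C]_(n, p)) :
  (A *m B)^t* = B^t* *m A^t*.
Proof. by rewrite trmx_mul map_mxM. Qed.

Lemma qfE n (w : 'cV[C]_n) : qf w = \sum_i w i 0 * (w i 0)^*.
Proof. by rewrite /qf mxE; apply: eq_bigr => i _; rewrite !mxE mulrC. Qed.

Lemma qf_ge0 n (w : 'cV[C]_n) : 0 <= qf w.
Proof. by rewrite qfE; apply: sumr_ge0 => i _; exact: mul_conjC_ge0. Qed.

Lemma qf_unitary n (Q : 'M[C]_n) (w : 'cV[C]_n) : Q^t* *m Q = 1%:M -> qf (Q *m w) = qf w.
Proof.
by move=> QQ; rewrite /qf trCmul mulmxA -[w^t* *m _ *m _]mulmxA QQ mulmx1.
Qed.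

Lemma conj_phi (x : R) : (phi x)^* = phi x.
Proof. exact/conj_Creal/phi_real. Qed.

Lemma qf_phi n (v : 'cV[R]_n) : qf (map_mx phi v) = phi (\sum_i v i 0 ^+ 2).
Proof.
rewrite qfE rmorph_sum; apply: eq_bigr => i _.
by rewrite !mxE rmorphXn expr2; congr (_ * _); apply: conj_phi.
Qed.

Lemma qf_diag n (g : 'I_n -> R) (u : 'cV[C]_n) b :
  (forall m, `|g m| <= b) ->
  qf (diag_mx (\row_i phi (g i)) *m u) <= phi (b ^+ 2) * qf u.
Proof.
move=> gb; rewrite !qfE mulr_sumr; apply: ler_sum => i _.
rewrite mul_diag_mx !mxE.
have E : (phi (g i) * u i 0)^* = phi (g i) * (u i 0)^*.
  rewrite rmorphM; congr (_ * _); exact: conj_phi.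
rewrite E.
have -> : phi (g i) * u i 0 * (phi (g i) * (u i 0)^*) = phi (g i ^+ 2) * (u i 0 * (u i 0)^*).
  by rewrite rmorphXn; ring.
apply: ler_wpM2r; first exact: mul_conjC_ge0.
rewrite lecR; have := gb i; rewrite ler_norml => /andP[h1 h2]; nra.
Qed.

Lemma sq_bound n (M : 'M[R]_n) (P : 'M[C]_n) (g : 'I_n -> R) b :
  P \is unitarymx -> map_mx phi M = Dg P (fun i => phi (g i)) ->
  (forall m, `|g m| <= b) ->
  forall v : 'cV[R]_n, \sum_i ((M *m v) i 0) ^+ 2 <= b ^+ 2 * \sum_i (v i 0) ^+ 2.
Proof.
move=> PU ME gb v.
rewrite -lecR -/(phi _) -qf_phi map_mxM ME /Dg -!mulmxA qf_unitary; last first.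
  by rewrite trmxCK (PPt PU).
rewrite rmorphM /= -qf_phi.
apply: le_trans; first exact: (qf_diag _ gb).
rewrite qf_unitary //; exact: PtP.
Qed.

Lemma specnorm_le n (M : 'M[R]_n.+1) b : 0 <= b ->
  (forall v : 'cV[R]_n.+1, \sum_i ((M *m v) i 0) ^+ 2 <= b ^+ 2 * \sum_i (v i 0) ^+ 2) ->
  specnorm M <= b.
Proof.
move=> b0 H; apply: ge_sup.
  exists (vnorm (M *m const_mx 1) / vnorm (const_mx 1 : 'cV[R]_n.+1)).
  exists (const_mx 1) => //=.
  by apply/eqP => /matrixP /(_ 0 0); rewrite !mxE => /eqP; rewrite oner_eq0.
move=> _ [v /= v0 <-].
have pos : 0 < \sum_i (v i 0) ^+ 2.
  have [i vi] : exists i, v i 0 != 0.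
    apply/existsP; apply: contraNT v0 => /existsPn H0.
    by apply/eqP/matrixP => i j; rewrite ord1 mxE; apply/eqP; rewrite -[_ == _]negbK H0.
  have hi : 0 < v i 0 ^+ 2 by rewrite lt_def sqrf_eq0 vi sqr_ge0.
  rewrite (bigD1 i) //=; apply: (lt_le_trans hi); rewrite lerDl.
  by apply: sumr_ge0 => j _; exact: sqr_ge0.
rewrite /vnorm ler_pdivrMr ?sqrtr_gt0 //.
rewrite -(ger0_norm b0) -sqrtr_sqr -sqrtrM ?sqr_ge0 // ler_sqrt; first exact: H.
by apply: mulr_ge0; [exact: sqr_ge0 | exact: ltW].
Qed.
End Norm.
Section Scalar.
Variable R : realType.

Lemma pow_diff (a e : R) k : 0 <= a <= 1 -> 0 <= e <= 1 ->
  `|a ^+ k - e ^+ k| <= k%:R * `|a - e|.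
Proof.
move=> /andP[a0 a1] /andP[e0 e1]; elim: k => [|k IH].
  by rewrite !expr0 subrr normr0 mul0r.
have -> : a ^+ k.+1 - e ^+ k.+1 = a * (a ^+ k - e ^+ k) + e ^+ k * (a - e).
  by rewrite !exprS; ring.
apply: (le_trans (ler_normD _ _)); rewrite !normrM -addn1 natrD mulrDl mul1r.
apply: lerD.
  rewrite (ger0_norm a0); apply: le_trans IH; rewrite ler_piMl //.
rewrite ger0_norm ?exprn_ge0 //; apply: ler_piMl => //; exact: exprn_ile1.
Qed.

Lemma exp_close (x : R) : 0 <= x -> `|(1 - x) - expR (- x)| <= x ^+ 2.
Proof.
move=> x0.
have h1 : 1 - x <= expR (- x) by have := expR_ge1Dx (- x); rewrite -[1 - x]/(1 + - x).
have hx : 1 + x <= expR x := expR_ge1Dx x.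
have h2 : expR (- x) <= (1 + x)^-1.
  rewrite expRN lef_pV2 ?posrE ?expR_gt0 //; lra.
have h3 : (1 + x)^-1 <= 1 - x + x ^+ 2.
  rewrite -[(1 + x)^-1]mul1r ler_pdivrMr; last lra.
  nra.
rewrite ler0_norm ?subr_le0 //; lra.
Qed.

Lemma scalar_bound (N : nat) (c s d lam : R) : s = N%:R * c -> 0 <= c ->
  0 <= d -> d <= lam -> c * lam <= 1 ->
  `|(1 - c * d) ^+ N - expR (- s * d)| <= N%:R * (c * lam) ^+ 2.
Proof.
move=> sE c0 d0 dl cl.
have x0 : 0 <= c * d by exact: mulr_ge0.
have xl : c * d <= c * lam by exact: ler_wpM2l.
have -> : - s * d = N%:R * (- (c * d)) by rewrite sE; ring.
rewrite expRM_natl.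
apply: le_trans (pow_diff _ _ _) _.
- apply/andP; split; lra.
- by rewrite expR_ge0 /= expR_le1; lra.
apply: ler_wpM2l => //; apply: le_trans (exp_close x0) _.
rewrite ler_sqr //; exact: le_trans xl.
Qed.
End Scalar.
Lemma Dg_sub (C : numClosedFieldType) n (P : 'M[C]_n) f g :
  Dg P f - Dg P g = Dg P (fun i => f i - g i).
Proof.
rewrite /Dg -mulmxBl -mulmxBr; congr (_ *m _ *m _).
by apply/matrixP => i j; rewrite !mxE mulrnBl.
Qed.

Section Eig.
Variable R : realType.
Lemma phi_powB (x y : R) k :
  real_complex R x ^+ k - real_complex R y = real_complex R (x ^+ k - y).
Proof. by rewrite rmorphB rmorphXn. Qed.

Lemma rowsq_gt0 n (v : 'rV[R]_n) : v != 0 -> 0 < \sum_i (v 0 i) ^+ 2.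
Proof.
move=> v0.
have [i vi] : exists i, v 0 i != 0.
  apply/existsP; apply: contraNT v0 => /existsPn H0.
  by apply/eqP/matrixP => k j; rewrite ord1 mxE; apply/eqP; rewrite -[_ == _]negbK H0.
have hi : 0 < v 0 i ^+ 2 by rewrite lt_def sqrf_eq0 vi sqr_ge0.
rewrite (bigD1 i) //=; apply: (lt_le_trans hi); rewrite lerDl.
by apply: sumr_ge0 => j _; exact: sqr_ge0.
Qed.

Lemma eig_psd n m (B : 'M[R]_(n, m)) d : eigenvalue (B *m B^T) d -> 0 <= d.
Proof.
case/eigenvalueP => v vE v0.
have := congr1 (fun X => (X *m v^T) 0 0) vE => /=.
rewrite mulmxA -mulmxA -trmx_mul -scalemxAl mxE [in X in _ = X -> _]mxE => E.
have Sv := rowsq_gt0 v0.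
rewrite -(pmulr_lge0 _ Sv).
have -> : d * \sum_i v 0 i ^+ 2 = d * (v *m v^T) 0 0.
  by congr (_ * _); rewrite mxE; apply: eq_bigr => i _; rewrite mxE expr2.
rewrite -E; apply: sumr_ge0 => i _; rewrite [_^T _ _]mxE -expr2; exact: sqr_ge0.
Qed.
End Eig.

End Aux.

Unset Implicit Arguments.

Theorem lemma5 (R : realType) (n L : nat) (s : R) :
  (1 <= n)%N -> (1 <= L)%N -> 0 < s ->
  exists WV WQ WK WR : nat -> 'M[R]_n,
    forall (d : nat) (src dst : 'I_d -> 'I_n) (r : 'I_d -> R) (lam : R),
      is_graph src dst r ->
      is_lambda_max (laplacian src dst r) lam ->
      s * lam <= 3 ^+ L ->
      let Lap := laplacian src dst r in
      let Z0 := (1%:M - ((3 ^+ L)^-1 * s) *: Lap)^T in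
      specnorm (tf_run WV WQ WK WR Z0 L - expm (- s *: Lap))
        <= (3 ^+ L)^-1 * 3 * s ^+ 2 * lam ^+ 2.
Proof.
case: n => // n _ L1 s0.
exists (fun _ => 1%:M), (fun _ => 1%:M), (fun _ => 1%:M), (fun _ => - 1%:M).
move=> d src dst r lam _ [_ Hmax] sl /=.
set Lap := laplacian src dst r.
set Z0 := (1%:M - _ *: Lap)^T.
set t : R := 3 ^+ L.
have t0 : 0 < t by rewrite exprn_gt0.
have t0w : 0 <= t := ltW t0.
have s0w : 0 <= s := ltW s0.
set c := t^-1 * s.
have c0 : 0 <= c by rewrite mulr_ge0 // ?invr_ge0 ltW.
have cl : c * lam <= 1.
  by rewrite /c -mulrA mulrC ler_pdivrMr // mul1r.
have tN : t = (3 ^ L)%:R by rewrite natrX.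
have sE : s = (3 ^ L)%:R * c by rewrite -tN /c mulrA mulfV ?mul1r // gt_eqF.
set B := incidence src dst r.
have LapE : Lap = B *m B^T by [].
have LapT : Lap^T = Lap by rewrite LapE trmx_mul trmxK.
have Z0E : Z0 = 1%:M - c *: Lap.
  rewrite /Z0 linearB /= trmx1 linearZ /= LapT; reflexivity.
have Z0T : Z0^T = Z0 by rewrite Z0E linearB /= trmx1 linearZ /= LapT.
rewrite (tf_pow Z0T L).
have [P [dd [PU LE eig]]] := spectral_real LapT.
have dd0 i : 0 <= dd i by apply: (@eig_psd _ _ _ B); rewrite -LapE.
have ddl i : dd i <= lam by apply: Hmax.
set g := fun i => (1 - c * dd i) ^+ (3 ^ L) - expR (- s * dd i).
set b := t^-1 * 3 * s ^+ 2 * lam ^+ 2.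
have b0 : 0 <= b.
  rewrite /b; apply: mulr_ge0; last exact: sqr_ge0.
  apply: mulr_ge0; last exact: sqr_ge0.
  by apply: mulr_ge0; rewrite ?invr_ge0.
apply: specnorm_le => //.
apply: (sq_bound PU (g := g)); last first.
  move=> m; apply: le_trans (scalar_bound sE c0 (dd0 m) (ddl m) cl) _.
  rewrite -tN /b.
  have -> : t * (c * lam) ^+ 2 = t^-1 * s ^+ 2 * lam ^+ 2.
    by rewrite /c; field; rewrite gt_eqF.
  have p : 0 <= t^-1 * s ^+ 2 * lam ^+ 2.
    apply: mulr_ge0; last exact: sqr_ge0.
    by apply: mulr_ge0; [rewrite invr_ge0 | exact: sqr_ge0].
  have -> : t^-1 * 3 * s ^+ 2 * lam ^+ 2 = 3 * (t^-1 * s ^+ 2 * lam ^+ 2) by ring.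
  lra.
have ZE : map_mx (real_complex R) Z0 = Dg P (fun i => real_complex R (1 - c * dd i)).
  rewrite Z0E map_mxB map_mx1 map_mxZ LE Dg_scale -(Dg_1 PU) Dg_sub.
  congr Dg; apply: funext => i; apply: complex_ext => /=; ring.
have EE := @expm_spec _ _ (- s *: Lap) P (fun i => - s * dd i) PU.
rewrite map_mxB map_mxX ZE Dg_exp // EE; last first.
  rewrite map_mxZ LE Dg_scale; congr Dg; apply: funext => i.
  by rewrite rmorphM.
rewrite Dg_sub; congr Dg; apply: funext => i.
exact: phi_powB.
Qed.
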